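(* Let $\mathcal{A}=\mathbb{R}[x^2,x^3]$ (the subring of $\mathbb{R}[x]$ generated over $\mathbb{R}$ by $x^2$ and $x^3$), with field of fractions $\mathcal{F}$, and let $\mathcal{Z}=\{\alpha x^2+\beta x^3\mid \alpha,\beta\in\mathcal{A}\}$ be the ideal of elements of $\mathcal{A}$ with zero constant term. Then every causal (single-input single-output) transfer function, i.e. every $p\in\mathcal{P}=\{n/d\mid n\in\mathcal{A},\ d\in\mathcal{A}\setminus\mathcal{Z}\}$, is stabilizable.
   Context: For a single-input single-output plant $p\in\mathcal{F}$ and controller $c\in\mathcal{F}$ with $1+pc\neq0$, the closed-loop matrix is $H(p,c)=\begin{pmatrix}(1+pc)^{-1} & -p(1+pc)^{-1}\\ c(1+pc)^{-1} & (1+pc)^{-1}\end{pmatrix}$; $p$ is stabilizable if there exists $c\in\mathcal{F}$ with $1+pc\neq0$ such that all entries of $H(p,c)$ lie in $\mathcal{A}$. *)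

(* Defs.v *)
From HB Require Import structures.
From mathcomp Require Import all_boot all_order all_algebra.
From mathcomp Require Import reals.
Set Implicit Arguments. Unset Strict Implicit. Unset Printing Implicit Defensive.
Import Order.TTheory GRing.Theory Num.Theory.
Local Open Scope ring_scope.

Notation "x %:F" := (@FracField.tofrac _ x) : ring_scope.

Section Defs.
Variable R : realType.

(* A = R[x^2, x^3]: the image of R[X,Y] under X |-> x^2, Y |-> x^3.
   A bivariate polynomial is q : {poly {poly R}} (outer variable Y,
   coefficients polynomials in X). *)
Definition inA (p : {poly R}) : Prop :=
  exists q : {poly {poly R}}, p = (map_poly (fun a : {poly R} => a \Po 'X^2) q).['X^3].

Definition inZ (p : {poly R}) : Prop :=
  exists a b : {poly R}, [/\ inA a, inA b & p = a * 'X^2 + b * 'X^3].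

Definition inF (f : {fraction {poly R}}) : Prop :=
  exists a b : {poly R}, [/\ inA a, inA b, b != 0 & f = a%:F / b%:F].

Definition inAF (f : {fraction {poly R}}) : Prop :=
  exists a : {poly R}, inA a /\ f = a%:F.

Definition inP (f : {fraction {poly R}}) : Prop :=
  exists n d : {poly R}, [/\ inA n, inA d, ~ inZ d & f = n%:F / d%:F].

(* p in F is stabilizable: exists c in F, 1 + p c != 0, all entries of H(p,c) in A. *)
Definition stabilizable (p : {fraction {poly R}}) : Prop :=
  exists c : {fraction {poly R}},
    [/\ inF c, 1 + p * c != 0 &
        [/\ inAF ((1 + p * c)^-1), inAF (- p * (1 + p * c)^-1),
             inAF (c * (1 + p * c)^-1) & inAF ((1 + p * c)^-1)]].

End Defs.

(* Main.v *)
Require Import Defs.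
From HB Require Import structures.
From mathcomp Require Import all_boot all_order all_algebra.
From mathcomp Require Import reals.
From mathcomp Require Import ring.
Import GRing.Theory Num.Theory.
Local Open Scope ring_scope.

Section S.
Variable R : realType.

Lemma inA_coef1 (p : {poly R}) : inA p <-> p`_1 = 0.
Proof.
split.
  case=> q ->; rewrite horner_coef coef_sum big1 // => i _.
  rewrite -exprM coefMXn.
  case: i => [[|i] Hi] /=.
    rewrite coef_map_id0 ?comp_poly0 // coef_comp_poly_Xn //.
  by rewrite mulnS.
move=> p1.
set E := even_poly p; set O := odd_poly p.
exists (E%:P + (drop_poly 1 O)%:P * 'X).
have -> : map_poly (fun a : {poly R} => a \Po 'X^2) (E%:P + (drop_poly 1 O)%:P * 'X)
   = (E \Po 'X^2)%:P + (drop_poly 1 O \Po 'X^2)%:P * 'X.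
  apply/polyP => i; rewrite coef_map_id0 ?comp_poly0 // !coefD !coefMX !coefC.
  by case: i => [|[|i]] /=; rewrite ?addr0 ?add0r ?comp_poly0.
rewrite hornerD hornerMX !hornerC.
rewrite -{1}(poly_even_odd p) -/E -/O.
have HO : O = drop_poly 1 O * 'X.
  rewrite -{1}(poly_take_drop 1 O) expr1.
  suff -> : take_poly 1 O = 0 by rewrite add0r.
  apply/polyP => i; rewrite coef_take_poly coef0.
  by case: i => [|i] //=; rewrite coef_odd_poly.
rewrite {1}HO comp_polyM comp_polyX -mulrA.
by rewrite -exprSr.
Qed.


Lemma coef1M (p q : {poly R}) : (p * q)`_1 = p`_0 * q`_1 + p`_1 * q`_0.
Proof. by rewrite coefM big_ord_recr big_ord1 /=. Qed.

Lemma notZ (d : {poly R}) : inA d -> ~ inZ d -> d`_0 != 0.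
Proof.
move=> /inA_coef1 d1 nZ; apply/negP => /eqP d0; apply: nZ.
set q := drop_poly 2 d.
have Hd : d = q * 'X^2.
  rewrite -{1}(poly_take_drop 2 d) -/q.
  suff -> : take_poly 2 d = 0 by rewrite add0r.
  apply/polyP => i; rewrite coef_take_poly coef0.
  by case: i => [|[|i]] //=.
exists (q - (q`_1)%:P * 'X), (q`_1)%:P; split.
- by apply/inA_coef1; rewrite coefB coefMX coefC /= subrr.
- by apply/inA_coef1; rewrite coefC.
- by rewrite Hd mulrBl -mulrA -exprS addrNK.
Qed.

Lemma coefshift (p q : {poly R}) (k : R) :
  (p + k%:P * 'X * q)`_0 = p`_0 /\ (p + k%:P * 'X * q)`_1 = p`_1 + k * q`_0.
Proof. by rewrite -mulrA !coefD !coefCM !coefXM /= mulr0 addr0. Qed.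

Lemma fid1 (F : fieldType) (N D G U V : F) : G != 0 -> D != 0 -> V != 0 ->
  1 + (N * G) / (D * G) * (U / V) = (U * N + V * D) / (D * V).
Proof. move=> *; field. by apply/and3P; split. Qed.
Lemma fid2 (F : fieldType) (N D G V : F) : G != 0 -> D != 0 ->
  - ((N * G) / (D * G)) * (D * V) = - (N * V).
Proof. move=> *; field. by apply/andP; split. Qed.
Lemma fid3 (F : fieldType) (D U V : F) : V != 0 ->
  U / V * (D * V) = D * U.
Proof. move=> *; field. done. Qed.
Lemma fid4 (F : fieldType) (U V X : F) : V != 0 -> X != 0 ->
  U / V = (U * X) / (V * X).
Proof. move=> *; field. by apply/andP; split. Qed.

Lemma finish0 (n d n' d' g u v : {poly R}) :
  n = n' * g -> d = d' * g -> d != 0 -> v != 0 -> u * n' + v * d' = 1 ->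
  (d' * v)`_1 = 0 -> (n' * v)`_1 = 0 -> (d' * u)`_1 = 0 ->
  stabilizable (n%:F / d%:F).
Proof.
move=> Hn Hd dnz vnz Huv h1 h2 h3.
have gnz : g != 0 by move: dnz; rewrite Hd; apply: contraNneq => ->; rewrite mulr0.
have d'nz : d' != 0 by move: dnz; rewrite Hd; apply: contraNneq => ->; rewrite mul0r.
have Gnz : g%:F != 0 by rewrite tofrac_eq0.
have Dnz : d'%:F != 0 by rewrite tofrac_eq0.
have Vnz : v%:F != 0 by rewrite tofrac_eq0.
have X2nz : ('X^2 : {poly R}) != 0 by rewrite expf_neq0 // polyX_eq0.
have Hk : 1 + n%:F / d%:F * (u%:F / v%:F) = ((d' * v)%:F)^-1.
  rewrite Hn Hd !tofracM (@fid1 _ n'%:F _ _ u%:F _ Gnz Dnz Vnz).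
  by rewrite -!tofracM -tofracD Huv tofrac1 mul1r.
exists (u%:F / v%:F); split.
- exists (u * 'X^2), (v * 'X^2); split.
  + by apply/inA_coef1; rewrite coefMXn.
  + by apply/inA_coef1; rewrite coefMXn.
  + by rewrite mulf_neq0.
  + have X2F : ('X^2 : {poly R})%:F != 0 by rewrite tofrac_eq0.
    rewrite (tofracM u ('X^2)) (tofracM v ('X^2)); exact: (@fid4 _ u%:F _ _ Vnz X2F).
- by rewrite Hk invr_eq0 tofrac_eq0 mulf_neq0.
rewrite Hk invrK; split.
- by exists (d' * v); split => //; apply/inA_coef1.
- exists (- (n' * v)); split; first by apply/inA_coef1; rewrite coefN h2 oppr0.
  by rewrite Hn Hd tofracN !tofracM (@fid2 _ n'%:F _ _ v%:F Gnz Dnz).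
- exists (d' * u); split; first by apply/inA_coef1.
  by rewrite !tofracM (@fid3 _ d'%:F u%:F _ Vnz).
- by exists (d' * v); split => //; apply/inA_coef1.
Qed.

Lemma finish (n d n' d' g u v : {poly R}) :
  n = n' * g -> d = d' * g -> d != 0 -> u * n' + v * d' = 1 ->
  (d' * v)`_1 = 0 -> (n' * v)`_1 = 0 -> (d' * u)`_1 = 0 ->
  stabilizable (n%:F / d%:F).
Proof.
move=> Hn Hd dnz Huv h1 h2 h3.
have [v0|vnz] := eqVneq v 0; last first.
  exact: (@finish0 n d n' d' g u v Hn Hd dnz vnz Huv h1 h2 h3).
have n'nz : n' != 0.
  apply/eqP => n0; move: Huv; rewrite n0 v0 !mul0r mulr0 addr0 => /eqP.
  by rewrite eq_sym oner_eq0.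
apply: (@finish0 n d n' d' g (u + 'X^2 * d') (v - 'X^2 * n') Hn Hd dnz).
- by rewrite v0 sub0r oppr_eq0 mulf_neq0 // expf_neq0 // polyX_eq0.
- by rewrite -Huv; ring.
- by rewrite mulrBr coefB h1 mulrCA coefXnM /= subrr.
- by rewrite mulrBr coefB h2 mulrCA coefXnM /= subrr.
- by rewrite mulrDr coefD h3 mulrCA coefXnM /= addr0.
Qed.
End S.

Theorem proposition5 (R : realType) (p : {fraction {poly R}}) :
  inP p -> stabilizable p.
Proof.
case=> n [d [An Ad nZd ->]].
have d0 := @notZ R d Ad nZd.
have dnz : d != 0 by apply: contraNneq d0 => ->; rewrite coef0.
set g := gcdp n d.
have Hn : n = (n %/ g) * g by rewrite divpK // dvdp_gcdl.
have Hd : d = (d %/ g) * g by rewrite divpK // dvdp_gcdr.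
have cop : coprimep (n %/ g) (d %/ g) by apply: coprimep_div_gcd; rewrite dnz orbT.
have [[u v] /= Huv] := Bezout_eq1_coprimepP _ _ cop.
set n' := n %/ g in Hn cop Huv; set d' := d %/ g in Hd cop Huv.
move/(inA_coef1 R): An => n1; move/(inA_coef1 R): Ad => d1.
have Ha1 : d'`_0 * g`_1 + d'`_1 * g`_0 = 0 by rewrite -coef1M -Hd.
have Hb1 : n'`_0 * g`_1 + n'`_1 * g`_0 = 0 by rewrite -coef1M -Hn.
have a0g0 : d'`_0 * g`_0 != 0 by rewrite -coef0M -Hd.
have a0 : d'`_0 != 0 by move: a0g0; rewrite mulf_eq0 negb_or => /andP[].
have g0 : g`_0 != 0 by move: a0g0; rewrite mulf_eq0 negb_or => /andP[].
have B1 : u`_0 * n'`_1 + u`_1 * n'`_0 + (v`_0 * d'`_1 + v`_1 * d'`_0) = 0.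
  by rewrite -!coef1M -coefD Huv coefC.
have Ea1 : d'`_1 = - (d'`_0 * g`_1) / g`_0.
  have E : d'`_1 * g`_0 = - (d'`_0 * g`_1) by apply/eqP; rewrite -addr_eq0 addrC Ha1.
  by rewrite -E mulfK.
have Eb1 : n'`_1 = - (n'`_0 * g`_1) / g`_0.
  have E : n'`_1 * g`_0 = - (n'`_0 * g`_1) by apply/eqP; rewrite -addr_eq0 addrC Hb1.
  by rewrite -E mulfK.
have Ev1 : v`_1 = - (u`_0 * n'`_1 + u`_1 * n'`_0 + v`_0 * d'`_1) / d'`_0.
  have E : v`_1 * d'`_0 = - (u`_0 * n'`_1 + u`_1 * n'`_0 + v`_0 * d'`_1).
    by apply/eqP; rewrite -addr_eq0 addrC -addrA B1.
  by rewrite -E mulfK.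
pose k := - (d'`_0 * u`_1 + d'`_1 * u`_0) / d'`_0 ^+ 2.
apply: (@finish R n d n' d' g (u + k%:P * 'X * d') (v + (-k)%:P * 'X * n') Hn Hd dnz).
- by rewrite -Huv polyCN; ring.
- have [s0 s1] := @coefshift R v n' (-k).
  rewrite coef1M s0 s1 /k Ev1 Ea1 Eb1.
  field.
  by rewrite ?g0 ?a0.
- have [s0 s1] := @coefshift R v n' (-k).
  rewrite coef1M s0 s1 /k Ev1 Ea1 Eb1.
  field.
  by rewrite ?g0 ?a0.
- have [s0 s1] := @coefshift R u d' k.
  rewrite coef1M s0 s1 /k.
  field.
  by rewrite ?g0 ?a0.
Qed.
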